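(* For all $x,u\in\mathbb R$, \[\int_0^1|\dot K_t(x,u)|\,dt\le 10\sup_{0<t\le1}K_t(x,u).\]
   Context: $R(x)=x^2/2$. $K_t(x,u)=\frac{e^{R(x)}}{\sqrt{1-e^{-2t}}}\exp\bigl(-\frac12\frac{(e^{-t}u-x)^2}{1-e^{-2t}}\bigr)$ for $t>0$, and $\dot K_t=\partial K_t/\partial t$. *)

(* Defs.v *)
From HB Require Import structures.
From mathcomp Require Import all_boot all_order all_algebra.
From mathcomp Require Import all_classical all_reals all_analysis.
Set Implicit Arguments. Unset Strict Implicit. Unset Printing Implicit Defensive.
Import Order.TTheory GRing.Theory Num.Theory.
Local Open Scope ring_scope.

Definition Rpot {R : realType} (x : R) : R := x ^+ 2 / 2.

Definition Kt {R : realType} (t x u : R) : R :=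
  expR (Rpot x) / Num.sqrt (1 - expR (- (2 * t)))
  * expR (- (1 / 2) * ((expR (- t) * u - x) ^+ 2 / (1 - expR (- (2 * t))))).

Definition Ktdot {R : realType} (t x u : R) : R :=
  derive1 (fun s : R => Kt s x u) t.

(* Main.v *)
Require Import Defs.
From HB Require Import structures.
From mathcomp Require Import all_boot all_order all_algebra.
From mathcomp Require Import all_classical all_reals all_analysis.
From mathcomp Require Import measurable_realfun.
From mathcomp Require Import ring lra zify.
Import Order.TTheory GRing.Theory Num.Theory.
Import numFieldNormedType.Exports.
Local Open Scope classical_set_scope.
Local Open Scope ring_scope.
Section G.
Variable R : realType.
Local Notation mu := (@lebesgue_measure R).

Lemma cont_of_derive (F : R -> R) (t d : R) : is_derive t 1 F d -> {for t, continuous F}.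
Proof.
by move=> [dF _]; apply: differentiable_continuous; apply/derivable1_diffP.
Qed.

Lemma ivt_zero (f : R -> R) (a b t1 t2 : R) :
  (forall t, a <= t <= b -> {for t, continuous f}) ->
  a < t1 < b -> a < t2 < b -> t1 <= t2 ->
  f t1 < 0 -> 0 < f t2 -> exists c, a < c < b /\ f c = 0.
Proof.
move=> fc /andP[at1 t1b] /andP[at2 t2b] t12 f1 f2.
have := @IVT R f t1 t2 0 t12.
case.
- apply: continuous_in_subspaceT => t; rewrite inE /= in_itv /= => /andP[h1 h2].
  apply: fc; apply/andP; split.
    by apply: le_trans (ltW at1) h1.
  by apply: le_trans h2 (ltW t2b).
- apply/andP; split.
    by rewrite ge_min ltW.
  by rewrite le_max (ltW f2) orbT.
move=> c; rewrite in_itv /= => /andP[h1 h2] fc0.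
exists c; split => //; apply/andP; split.
  by apply: lt_le_trans at1 h1.
by apply: le_lt_trans h2 t2b.
Qed.

Lemma sign_const (f : R -> R) (a b : R) :
  (forall t, a <= t <= b -> {for t, continuous f}) ->
  (forall t, a < t < b -> f t != 0) ->
  (forall t, a < t < b -> 0 < f t) \/ (forall t, a < t < b -> f t < 0).
Proof.
move=> fc fn0.
have fcN : forall t, a <= t <= b -> {for t, continuous (fun x => - f x)}.
  by move=> t ht; apply: cvgN; apply: fc.
have key2 : forall t1 t2, a < t1 < b -> a < t2 < b -> f t1 < 0 -> 0 < f t2 -> False.
  move=> t1 t2 h1 h2 f1 f2.
  have [t12|t21] := leP t1 t2.
    have [c [hc fc0]] := @ivt_zero f a b t1 t2 fc h1 h2 t12 f1 f2.
    by move: (fn0 c hc); rewrite fc0 eqxx.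
  have [c [hc fc0]] : exists c, a < c < b /\ - f c = 0.
    by apply: (@ivt_zero _ a b t2 t1 fcN h2 h1 (ltW t21)); rewrite ?oppr_lt0 ?oppr_gt0.
  by move: (fn0 c hc); rewrite -oppr_eq0 fc0 eqxx.
case: (pselect (exists t, a < t < b /\ f t < 0)) => [[t1 [h1 f1]]|hn].
  right => t ht; rewrite lt_neqAle fn0 //=.
  rewrite leNgt; apply/negP => f2; exact: (key2 t1 t h1 ht f1).
left => t ht; rewrite lt_neqAle eq_sym fn0 //=.
rewrite leNgt; apply/negP => f2; apply: hn; exists t; split => //.
Qed.

Lemma tv_base (f F : R -> R) (a b M : R) : a < b ->
  (forall t, a <= t <= b -> is_derive t 1 F (f t)) ->
  (forall t, a <= t <= b -> {for t, continuous f}) ->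
  (forall t, a <= t <= b -> 0 <= F t <= M) ->
  (forall t, a < t < b -> f t != 0) ->
  (\int[mu]_(t in `[a, b]) (`|f t|)%:E <= M%:E)%E.
Proof.
move=> ab Fd fc FM fn0.
have aab : a <= a <= b by rewrite lexx ltW.
have bab : a <= b <= b by rewrite lexx ltW.
have cabs : {within `[a, b], continuous (fun t => `|f t|)}.
  apply: continuous_in_subspaceT => t; rewrite inE /= in_itv /= => ht.
  exact: (continuous_comp (fc t ht) (@norm_continuous _ R^o _)).
have [pos|neg] := @sign_const f a b fc fn0.
- have := @continuous_FTC2 R (fun t => `|f t|) F a b ab cabs.
  have dF : derivable_oo_LRcontinuous F a b.
    split.
    + move=> t; rewrite in_itv /= => /andP[h1 h2].
      by apply: (@ex_derive _ _ _ _ _ _ (f t)); apply: Fd; rewrite !ltW.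
    + apply: cvg_at_right_filter. apply: cont_of_derive (Fd a aab).
    + apply: cvg_at_left_filter. apply: cont_of_derive (Fd b bab).
  move=> /(_ dF) -> .
    rewrite -EFinB lee_fin.
    have := FM a aab; have := FM b bab; move=> /andP[_ h1] /andP[h2 _].
    by rewrite lerBlDr (le_trans h1) // lerDl.
  move=> t; rewrite in_itv /= => /andP[h1 h2].
  rewrite derive1E (@derive_val _ _ _ _ _ _ _ (Fd t _)) ?gtr0_norm ?pos ?h1 ?h2 //.
  by rewrite !ltW.
- have := @continuous_FTC2 R (fun t => `|f t|) (fun t => - F t) a b ab cabs.
  have Fd' : forall t, a <= t <= b -> is_derive t 1 (fun t => - F t) (- f t).
    by move=> t ht; have := Fd t ht; apply: is_deriveN.
  have dF : derivable_oo_LRcontinuous (fun t => - F t) a b.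
    split.
    + move=> t; rewrite in_itv /= => /andP[h1 h2].
      by apply: (@ex_derive _ _ _ _ _ _ (- f t)); apply: Fd'; rewrite !ltW.
    + apply: cvg_at_right_filter. apply: cont_of_derive (Fd' a aab).
    + apply: cvg_at_left_filter. apply: cont_of_derive (Fd' b bab).
  move=> /(_ dF) -> .
    rewrite -EFinB lee_fin.
    have := FM a aab; have := FM b bab; move=> /andP[h1 _] /andP[_ h2].
    by rewrite opprK addrC lerBlDr (le_trans h2) // lerDl.
  move=> t; rewrite in_itv /= => /andP[h1 h2].
  rewrite derive1E (@derive_val _ _ _ _ _ _ _ (Fd' t _)) ?ltr0_norm ?neg ?h1 ?h2 //.
  by rewrite !ltW.
Qed.

Lemma int_split (g : R -> R) (a c b : R) : a <= c -> c <= b ->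
  (forall t, 0 <= g t) -> measurable_fun `[a, b] g ->
  (\int[mu]_(t in `[a, b]) (g t)%:E =
   \int[mu]_(t in `[a, c]) (g t)%:E + \int[mu]_(t in `[c, b]) (g t)%:E)%E.
Proof.
move=> ac cb g0 mg.
have mg' : measurable_fun `[a, b] (EFin \o g) by apply/measurable_EFinP.
rewrite (@itv_bndbnd_setU _ _ (BLeft a) (BRight c) (BRight b)); last 2 first.
  by rewrite bnd_simp.
  by rewrite bnd_simp.
rewrite ge0_integral_setU //=.
- rewrite integral_itv_obnd_cbnd //.
  apply: measurable_funS mg' => //.
  by move=> t /=; rewrite !in_itv /= => /andP[h1 h2]; rewrite h2 andbT (le_trans ac) // ltW.
- rewrite -(@itv_bndbnd_setU _ _ (BLeft a) (BRight c) (BRight b)) ?bnd_simp //.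
- by move=> t _; rewrite lee_fin.
- rewrite disj_set2E; apply/eqP/seteqP; split => // t /= [].
  by rewrite !in_itv /= => /andP[_ h1] /andP[h2 _]; move: (lt_le_trans h2 h1); rewrite ltxx.
Qed.

Lemma meas_abs (f : R -> R) (a b : R) :
  (forall t, a <= t <= b -> {for t, continuous f}) ->
  measurable_fun `[a, b] (fun t => `|f t|).
Proof.
move=> fc; apply: subspace_continuous_measurable_fun => //.
apply: continuous_in_subspaceT => t; rewrite inE /= in_itv /= => ht.
exact: (continuous_comp (fc t ht) (@norm_continuous _ R^o _)).
Qed.

Lemma tv_ind (n : nat) : forall (f F : R -> R) (a b M : R), a < b ->
  (forall t, a <= t <= b -> is_derive t 1 F (f t)) ->
  (forall t, a <= t <= b -> {for t, continuous f}) ->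
  (forall t, a <= t <= b -> 0 <= F t <= M) ->
  (forall s : seq R, uniq s -> all (fun t => (a < t < b) && (f t == 0)) s ->
     (size s <= n)%N) ->
  (\int[mu]_(t in `[a, b]) (`|f t|)%:E <= (2 ^+ n * M)%:E)%E.
Proof.
elim: n => [|n IH] f F a b M ab Fd fc FM Hz.
- rewrite expr0 mul1r; apply: (@tv_base f F a b M ab Fd fc FM) => t ht.
  apply/negP => /eqP ft0.
  by have := Hz [:: t] erefl; rewrite /= ht ft0 eqxx => /(_ erefl).
case: (pselect (exists c, a < c < b /\ f c = 0)) => [[c [/andP[ac cb] fc0]]|hn].
- rewrite (@int_split (fun t => `|f t|) a c b (ltW ac) (ltW cb)) //; last exact: meas_abs.
  have -> : 2 ^+ n.+1 * M = 2 ^+ n * M + 2 ^+ n * M.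
    by rewrite exprS -mulrA mulr_natl mulr2n.
  rewrite EFinD.
  have sub1 : forall t, a <= t <= c -> a <= t <= b.
    by move=> t /andP[h1 h2]; rewrite h1 (le_trans h2) // ltW.
  have sub2 : forall t, c <= t <= b -> a <= t <= b.
    by move=> t /andP[h1 h2]; rewrite h2 (le_trans _ h1) // ltW.
  apply: leeD.
  + apply: (IH f F a c M ac) => //.
    * by move=> t ht; apply: Fd; apply: sub1.
    * by move=> t ht; apply: fc; apply: sub1.
    * by move=> t ht; apply: FM; apply: sub1.
    move=> s us als.
    have : (size (c :: s) <= n.+1)%N.
      apply: Hz => /=.
        rewrite us andbT; apply/negP => cs.
        by move: (allP als c cs) => /andP[/andP[_]]; rewrite ltxx.
      rewrite ac cb fc0 eqxx /=; apply/allP => t ts.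
      move: (allP als t ts) => /andP[/andP[h1 h2] ->]; rewrite h1 andbT /=.
      exact: lt_trans h2 cb.
    by [].
  + apply: (IH f F c b M cb) => //.
    * by move=> t ht; apply: Fd; apply: sub2.
    * by move=> t ht; apply: fc; apply: sub2.
    * by move=> t ht; apply: FM; apply: sub2.
    move=> s us als.
    have : (size (c :: s) <= n.+1)%N.
      apply: Hz => /=.
        rewrite us andbT; apply/negP => cs.
        by move: (allP als c cs) => /andP[/andP[]]; rewrite ltxx.
      rewrite ac cb fc0 eqxx /=; apply/allP => t ts.
      move: (allP als t ts) => /andP[/andP[h1 h2] ->]; rewrite h2 /= andbT.
      by rewrite (lt_trans ac h1).
    by [].
- have M0 : 0 <= M.
    have /andP[h1 h2] : 0 <= F a <= M by apply: FM; rewrite lexx ltW.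
    exact: le_trans h1 h2.
  apply: le_trans (@tv_base f F a b M ab Fd fc FM _) _.
    by move=> t ht; apply/negP => /eqP ft0; apply: hn; exists t.
  by rewrite lee_fin ler_peMl // exprn_ege1 // ler1n.
Qed.
End G.

Section K.
Variable R : realType.
Variables x u : R.



Definition vv (t : R) : R := 1 - expR (- (2 * t)).
Definition ww (t : R) : R := expR (- t) * u - x.
Definition BB (t : R) : R :=
  - expR (- (2 * t)) / vv t + expR (- t) * u * ww t / vv t
  + ww t ^+ 2 * expR (- (2 * t)) / vv t ^+ 2.
Definition Kd (t : R) : R := Kt t x u * BB t.

Lemma vv_gt0 (t : R) : 0 < t -> 0 < vv t.
Proof.
by move=> t0; rewrite /vv subr_gt0 expR_lt1 oppr_lt0 mulr_gt0.
Qed.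

Lemma Kt_derive (t : R) : 0 < t -> is_derive t 1 (fun s => Kt s x u) (Kd t).
Proof.
move=> t0.
have v0 := @vv_gt0 t t0.
have hv : is_derive t 1 (fun s : R => 1 - expR (- (2 * s))) (2 * expR (- (2 * t))).
  apply: is_derive_eq.
  by rewrite -[2%:A]/(2 * 1); ring.
have hsq : is_derive t 1 (fun s : R => Num.sqrt (1 - expR (- (2 * s))))
   ((2 * Num.sqrt (vv t))^-1 * (2 * expR (- (2 * t)))).
  exact: (is_derive1_comp (is_derive1_sqrt v0) hv).
have sq0 : Num.sqrt (1 - expR (- (2 * t))) != 0.
  by rewrite gt_eqF // sqrtr_gt0.
have hinv := @is_deriveV R (fun s : R => Num.sqrt (1 - expR (- (2 * s)))) t _ 1 sq0 hsq.
have vn0 : 1 - expR (- (2 * t)) != 0 by rewrite gt_eqF.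
have hvinv := @is_deriveV R (fun s : R => 1 - expR (- (2 * s))) t _ 1 vn0 hv.
rewrite /Kt /Rpot.
apply: is_derive_eq.
rewrite /Kd /Kt /BB /ww /vv /Rpot.
rewrite -![_ *: _]/(_ * _).
set E := expR (- (1 / 2) * _).
set A := expR (x ^+ 2 / 2).
set q := Num.sqrt _.
have hq : q != 0 by [].
have he2 : expR (- (2 * t)) = 1 - q ^+ 2.
  by rewrite /q sqr_sqrtr ?subKr // ltW.
rewrite he2.
field.
rewrite (_ : 1 - (1 - q ^+ 2) = q ^+ 2); last by ring.
by rewrite expf_neq0 // hq.
Qed.

Lemma Kt_ge0 (t : R) : 0 <= Kt t x u.
Proof.
by rewrite /Kt mulr_ge0 ?divr_ge0 ?expR_ge0 ?sqrtr_ge0.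
Qed.

Lemma Kt_gt0 (t : R) : 0 < t -> 0 < Kt t x u.
Proof.
move=> t0; have := @vv_gt0 t t0; rewrite /vv => v0.
by rewrite /Kt mulr_gt0 ?divr_gt0 ?expR_gt0 ?sqrtr_gt0.
Qed.

Lemma Kd_derivable (t : R) : 0 < t -> exists d, is_derive t 1 Kd d.
Proof.
move=> t0.
have v0 := @vv_gt0 t t0.
have hv : is_derive t 1 (fun s : R => 1 - expR (- (2 * s))) (2 * expR (- (2 * t))).
  apply: is_derive_eq.
  by rewrite -[2%:A]/(2 * 1); ring.
have vn0 : 1 - expR (- (2 * t)) != 0 by rewrite gt_eqF.
have hvinv := @is_deriveV R (fun s : R => 1 - expR (- (2 * s))) t _ 1 vn0 hv.
have vn2 : (1 - expR (- (2 * t))) ^+ 2 != 0 by rewrite expf_neq0.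
have [d2 hv2] : exists d, is_derive t 1 (fun s : R => (1 - expR (- (2 * s))) ^+ 2) d.
  by eexists; exact _.
have hv2inv := @is_deriveV R (fun s : R => (1 - expR (- (2 * s))) ^+ 2) t _ 1 vn2 hv2.
have hK := @Kt_derive t t0.
rewrite /Kd /BB /ww /vv.
eexists; exact _.
Qed.

Lemma Kd_cont (t : R) : 0 < t -> {for t, continuous Kd}.
Proof. by move=> t0; have [d hd] := @Kd_derivable t t0; exact: cont_of_derive hd. Qed.

Definition Pc : {poly R} :=
  'X^3 - (u * x)%:P * 'X^2 + (u ^+ 2 + x ^+ 2 - 1)%:P * 'X - (u * x)%:P.

Lemma Pc_horner (y : R) :
  Pc.[y] = y ^+ 3 - u * x * y ^+ 2 + (u ^+ 2 + x ^+ 2 - 1) * y - u * x.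
Proof. by rewrite /Pc !hornerE. Qed.

Lemma Pc_size_eq : size Pc = 4.
Proof.
rewrite /Pc -!addrA size_addl ?size_polyXn //.
apply: (leq_ltn_trans (size_add _ _)); rewrite gtn_max; apply/andP; split.
  rewrite size_opp; apply: (leq_ltn_trans (size_mul_leq _ _)).
  rewrite size_polyXn addnS /=; by apply: (leq_ltn_trans (leq_add (size_polyC_leq1 _) (leqnn 2))).
apply: (leq_ltn_trans (size_add _ _)); rewrite gtn_max; apply/andP; split.
  apply: (leq_ltn_trans (size_mul_leq _ _)).
  by rewrite size_polyX addnS /=; apply: (leq_ltn_trans (leq_add (size_polyC_leq1 _) (leqnn 1))).
by rewrite size_opp; apply: (leq_ltn_trans (size_polyC_leq1 _)).
Qed.

Lemma Pc_size : (size Pc <= 4)%N.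
Proof. by rewrite Pc_size_eq. Qed.

Lemma Pc_neq0 : Pc != 0.
Proof.
by rewrite -size_poly_eq0 Pc_size_eq.
Qed.

Lemma Kd_zero (t : R) : 0 < t -> Kd t = 0 -> root Pc (expR (- t)).
Proof.
move=> t0 hK.
have hB : BB t = 0.
  have := @Kt_gt0 t t0 => kp.
  move: hK; rewrite /Kd => /(congr1 (fun z => (Kt t x u)^-1 * z)).
  by rewrite mulr0 mulKf // gt_eqF.
have v0 := @vv_gt0 t t0.
rewrite /root Pc_horner.
have e2 : expR (- (2 * t)) = expR (- t) ^+ 2 by rewrite -mulrN expRM_natl.
have s0 : expR (- t) != 0 by rewrite gt_eqF ?expR_gt0.
move: hB v0; rewrite /BB /ww /vv e2 => hB v0.
have vn0 : 1 - expR (- t) ^+ 2 != 0 by rewrite gt_eqF.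
have : expR (- t) * (expR (- t) ^+ 3 - u * x * expR (- t) ^+ 2 + (u ^+ 2 + x ^+ 2 - 1) * expR (- t) - u * x) = 0.
  rewrite -[RHS](mul0r ((1 - expR (- t) ^+ 2) ^+ 2)) -hB.
  by field.
by move/eqP; rewrite mulf_eq0 (negbTE s0).
Qed.

Lemma zeros_bound (a b : R) : 0 < a -> forall s : seq R, uniq s ->
  all (fun t => (a < t < b) && (Kd t == 0)) s -> (size s <= 3)%N.
Proof.
move=> a0 s us als.
have inj : injective (fun t : R => expR (- t)).
  by move=> t1 t2 /expR_inj /oppr_inj.
have := @max_poly_roots _ Pc (map (fun t => expR (- t)) s) Pc_neq0.
rewrite (map_inj_uniq inj) us size_map.
have -> : all (root Pc) [seq expR (- t) | t <- s].
  apply/allP => y /mapP [t ts ->].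
  move: (allP als t ts) => /andP[/andP[h1 _] /eqP h].
  by apply: Kd_zero => //; apply: lt_trans h1.
move=> /(_ erefl erefl) h.
by have := leq_trans h Pc_size.
Qed.
End K.

Local Open Scope ereal_scope.

Lemma core (R : realType) (x u r : R) :
  (forall t : R, (0 < t <= 1)%R -> (Kt t x u <= r)%R) ->
  \int[@lebesgue_measure R]_(t in `]0%R, 1%R]) `|(Ktdot t x u)%:E| <= (8 * r)%:E.
Proof.
move=> Kr.
set D : set R := `]0%R, 1%R]%classic.
have mD : measurable D by exact: measurable_itv.
have -> : \int[@lebesgue_measure R]_(t in D) `|(Ktdot t x u)%:E| =
          \int[@lebesgue_measure R]_(t in D) (`|Kd R x u t|)%:E.
  apply: eq_integral => t; rewrite /D inE /= in_itv /= => /andP[t0 _].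
  rewrite /Ktdot derive1E.
  by rewrite (@derive_val _ _ _ _ _ _ _ (@Kt_derive R x u t t0)).
have mKd : measurable_fun D (Kd R x u).
  apply: (measurable_funS (E := (`]0%R, 2%R[%classic : set R))) => //.
    move=> t; rewrite /D /= !in_itv /= => /andP[t0 h]; rewrite t0 (le_lt_trans h) // ltr1n //.
  apply: open_continuous_measurable_fun; first exact: interval_open.
  move=> t; rewrite inE /= in_itv /= => /andP[t0 _].
  exact: Kd_cont.
have mK : measurable_fun D (fun t => (`|Kd R x u t|)%:E).
  apply/measurable_EFinP.
  exact: (measurableT_comp (@normr_measurable R setT) mKd).
pose e (n : nat) : R := ((n.+2)%:R^-1)%R.
have e0 n : (0 < e n)%R by rewrite /e invr_gt0 ltr0n.
have e1 n : (e n < 1)%R by rewrite /e invf_lt1 ?ltr0n // ltr1n.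
pose G (n : nat) := (fun t => (`|Kd R x u t|)%:E) \_ `[e n, 1%R].
have mG n : measurable_fun D (G n).
  apply/measurable_restrict => //.
  by apply: measurable_funS mK.
have G0 n t : D t -> 0 <= G n t.
  by move=> _; rewrite /G /patch; case: ifP => _ //; rewrite lee_fin.
have ndG t : D t -> nondecreasing_seq (G ^~ t).
  move=> _ m n mn; rewrite /G /patch.
  have p0 : (point : \bar R) = 0 by [].
  rewrite p0.
  case: ifPn => [hm|_]; last by case: ifP => _; rewrite ?lexx // lee_fin.
  suff -> : t \in `[e n, 1%R]%classic by [].
  move: hm; rewrite !inE /= !in_itv /= => /andP[h1 h2]; rewrite h2 andbT.
  apply: le_trans h1; rewrite /e lef_pV2 ?posrE ?ltr0n // ler_nat.
  by rewrite ltnS.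
have bound n : \int[@lebesgue_measure R]_(t in D) G n t <= (8 * r)%:E.
  rewrite /G -integral_mkcondr setIidr; last first.
    move=> t /=; rewrite /D !in_itv /= => /andP[h1 h2].
    by rewrite in_itv /= h2 andbT (lt_le_trans (e0 n) h1).
  have pos : forall t : R, (e n <= t <= 1)%R -> (0 < t)%R.
    by move=> t /andP[h1 _]; exact: lt_le_trans (e0 n) h1.
  have := @tv_ind R 3 (Kd R x u) (fun s => Kt s x u) (e n) 1%R r (e1 n).
  have -> : (2 ^+ 3 * r = 8 * r :> R)%R.
    by congr (_ * _)%R; rewrite -natrX.
  apply.
  - by move=> t ht; apply: Kt_derive; exact: pos.
  - by move=> t ht; apply: Kd_cont; exact: pos.
  - move=> t ht; rewrite Kt_ge0 /=; apply: Kr.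
    by rewrite (pos t ht); case/andP: ht.
  - exact: zeros_bound (e0 n).
have -> : \int[@lebesgue_measure R]_(t in D) (`|Kd R x u t|)%:E =
          \int[@lebesgue_measure R]_(t in D) (fun t => limn (G ^~ t)) t.
  apply: eq_integral => t; rewrite /D inE /= in_itv /= => /andP[t0 t1].
  apply/esym/cvg_lim => //.
  apply: cvg_near_cst.
  have := near_infty_natSinv_lt (PosNum t0).
  apply: filterS => n hn.
  rewrite /G /patch ifT //.
  rewrite inE /= in_itv /= t1 andbT; apply: ltW; apply: le_lt_trans hn.
  by rewrite /e lef_pV2 ?posrE ?ltr0n // ler_nat.
rewrite (monotone_convergence (@lebesgue_measure R) mD mG G0 ndG).
apply: lime_le.
  exact: cvgP (@cvg_monotone_convergence _ _ R (@lebesgue_measure R) D mD G mG G0 ndG).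
by apply: nearW => n; exact: bound.
Qed.

Local Open Scope ereal_scope.

Theorem mainTheorem7 (R : realType) (x u : R) :
  \int[@lebesgue_measure R]_(t in `]0%R, 1%R]) `|(Ktdot t x u)%:E|
  <= 10%:E * ereal_sup [set (Kt t x u)%:E | t in `]0%R, 1%R]].
Proof.
set S := [set (Kt t x u)%:E | t in `]0%R, 1%R]].
have ub : forall t : R, (0 < t <= 1)%R -> (Kt t x u)%:E <= ereal_sup S.
  move=> t ht; apply: ereal_sup_ubound; exists t => //.
have h1 : (0 < (1:R) <= 1)%R by rewrite ltr01 lexx.
case HS : (ereal_sup S) => [r| |]; last 2 first.
- by rewrite gt0_muley ?lte_fin // leey.
- by have := ub 1%R h1; rewrite HS leeNy_eq.
have Kr : forall t : R, (0 < t <= 1)%R -> (Kt t x u <= r)%R.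
  by move=> t ht; have := ub t ht; rewrite HS lee_fin.
have r0 : (0 <= r)%R by apply: le_trans (Kr 1%R h1); exact: Kt_ge0.
apply: (@le_trans _ _ (8 * r)%:E); last first.
  by rewrite -EFinM lee_fin ler_wpM2r // ler_nat.
exact: core.
Qed.
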